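(* Let $n\ge 1$, $N=\{1,\dots,n\}$, and let $\mathcal{T}\in\mathbb{R}^{2\times\cdots\times 2}$ (order $n$) be a coefficient tensor realized by a tensor network with maximum bond dimension $\chi$, defining the multilinear map $g(\tilde x_1,\dots,\tilde x_n)=\mathcal{T}\times_1\tilde x_1\times_2\cdots\times_n\tilde x_n$ for $\tilde x_j\in\mathbb{R}^2$. Fix $x\in\mathbb{R}^n$, set $\tilde x_j=[x_j,1]^\top$, and for $C\subseteq N$ define the coalition value $v_g(x,C)=g(\tilde y_1,\dots,\tilde y_n)$ where $\tilde y_j=[x_j,1]^\top$ if $j\in C$ and $\tilde y_j=[0,1]^\top$ if $j\notin C$. Let $w(\cdot,n):\{0,\dots,n-1\}\to\mathbb{R}$ be any weights and, for $i\in N$, let \[ \Phi_i=\sum_{C\subseteq N\setminus\{i\}} w(|C|,n)\,\bigl[v_g(x,C\cup\{i\})-v_g(x,C)\bigr]. \] Then $\Phi_i$ can be computed exactly in $O(n\cdot\mathrm{poly}(\chi)+n^2)$ time.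
   Context: $\times_j$ denotes the mode-$j$ tensor–vector product (contracting the $j$-th index of the tensor with the vector). A tensor network represents $\mathcal{T}$ as a collection of small tensors (cores) connected by contracted internal edges (e.g. a tensor train or a balanced binary tree), with one uncontracted physical leg of dimension $2$ per feature; the maximum bond dimension (maximal cut rank) $\chi$ is the largest product of internal bond dimensions across any cut of the network. Following the paper's cost convention, one forward evaluation of $g$ (contraction of the network with $n$ input vectors) costs $O(\mathrm{poly}(\chi))$ time. *)

(* Defs.v *)
From HB Require Import structures.
From mathcomp Require Import all_boot all_order all_algebra.
Set Implicit Arguments. Unset Strict Implicit. Unset Printing Implicit Defensive.
Import Order.TTheory GRing.Theory Num.Theory.
Local Open Scope ring_scope.

(* Index 0 of each physical leg corresponds to the first component of
   \tilde x_j = [x_j, 1]^T, index 1 to the second component. *)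

Definition tensor (R : Type) (n : nat) := {ffun 'I_n -> 'I_2} -> R.

Definition gmap (R : nzRingType) (n : nat) (T : tensor R n)
  (v : 'I_n -> 'I_2 -> R) : R :=
  \sum_(s : {ffun 'I_n -> 'I_2}) T s * \prod_(j < n) v j (s j).

Definition tvec (R : nzRingType) (a : R) : 'I_2 -> R :=
  fun k => if k == ord0 then a else 1.

Definition coal (R : nzRingType) (n : nat) (T : tensor R n) (x : 'I_n -> R)
  (C : {set 'I_n}) : R :=
  gmap T (fun j => if j \in C then tvec (x j) else tvec 0).

Definition Phi (R : nzRingType) (n : nat) (T : tensor R n) (x : 'I_n -> R)
  (w : nat -> R) (i : 'I_n) : R :=
  \sum_(C : {set 'I_n} | i \notin C) w #|C| * (coal T x (i |: C) - coal T x C).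

(* Initial memory: x_1, ..., x_n, w(0,n), ..., w(n-1,n).
   - arithmetic instructions (constant, +, -, *, /) cost O(1) each;
   - a query instruction evaluates g (i.e. contracts the tensor network)
     on n input vectors read from registers, costing poly(chi) each
     (the paper's convention). *)
Inductive instr (n : nat) : Type :=
  | IConst of nat
  | IAdd of nat & nat
  | ISub of nat & nat
  | IMul of nat & nat
  | IDiv of nat & nat
  | IQuery of ('I_n -> 'I_2 -> nat).

Definition exec_instr (R : fieldType) (n : nat) (T : tensor R n)
  (mem : seq R) (ins : instr n) : R :=
  let r a := nth 0 mem a in
  match ins with
  | IConst k => k%:R
  | IAdd a b => r a + r b
  | ISub a b => r a - r b
  | IMul a b => r a * r b
  | IDiv a b => r a / r b
  | IQuery q => gmap T (fun j k => r (q j k))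
  end.

Fixpoint exec_prog (R : fieldType) (n : nat) (T : tensor R n)
  (mem : seq R) (P : seq (instr n)) : seq R :=
  match P with
  | [::] => mem
  | ins :: P' => exec_prog T (rcons mem (exec_instr T mem ins)) P'
  end.

Definition init_mem (R : Type) (n : nat) (x : 'I_n -> R) (w : nat -> R)
  : seq R := [seq x j | j <- enum 'I_n] ++ [seq w k | k <- iota 0 n].

Definition run (R : fieldType) (n : nat) (T : tensor R n) (x : 'I_n -> R)
  (w : nat -> R) (P : seq (instr n)) : R :=
  last 0 (exec_prog T (init_mem x w) P).

Definition is_query (n : nat) (ins : instr n) : bool :=
  if ins is IQuery _ then true else false.

Definition n_queries (n : nat) (P : seq (instr n)) : nat := count (@is_query n) P.
Definition n_arith (n : nat) (P : seq (instr n)) : nat :=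
  count (fun ins => ~~ is_query ins) P.

(* Main.v *)
Require Import Defs.
From mathcomp Require Import all_boot all_order all_algebra.
From mathcomp Require Import ring lra zify.
Import Order.TTheory GRing.Theory Num.Theory.
Set Implicit Arguments. Unset Strict Implicit. Unset Printing Implicit Defensive.
Local Open Scope ring_scope.

Lemma gmap_ext (R : nzRingType) n (T : tensor R n) (v v' : 'I_n -> 'I_2 -> R) :
  (forall l k, v l k = v' l k) -> gmap T v = gmap T v'.
Proof. by move=> h; apply: eq_bigr => s _; congr (_ * _); apply: eq_bigr. Qed.

Definition rb n (B : nat) (ins : instr n) : Prop :=
  match ins with
  | IConst _ => True
  | IAdd a b | ISub a b | IMul a b | IDiv a b => (a < B)%N /\ (b < B)%N
  | IQuery q => forall l k, (q l k < B)%N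
  end.

Fixpoint allrb n (B : nat) (P : seq (instr n)) : Prop :=
  match P with [::] => True | ins :: P' => rb B ins /\ allrb B P' end.

Lemma allrb_cat n B (P1 P2 : seq (instr n)) : allrb B P1 -> allrb B P2 -> allrb B (P1 ++ P2).
Proof. by elim: P1 => //= ins P IH [h1 h2] h3; split => //; apply: IH. Qed.

Lemma allrb_map n B (f : nat -> instr n) a r :
  (forall t, (a <= t)%N -> (t < a + r)%N -> rb B (f t)) -> allrb B (map f (iota a r)).
Proof.
elim: r a => //= r IH a h; split; first by apply: h; lia.
by apply: IH => t h1 h2; apply: h; lia.
Qed.

Lemma exec_instr_cat (R : fieldType) n (T : tensor R n) (M M' : seq R) ins :
  rb (size M) ins -> exec_instr T (M ++ M') ins = exec_instr T M ins.
Proof.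
case: ins => [k|a b|a b|a b|a b|q] /=; try (by case=> ha hb; rewrite !nth_cat ha hb); first by [].
by move=> h; apply: gmap_ext => l k; rewrite nth_cat h.
Qed.

Lemma exec_indep (R : fieldType) n (T : tensor R n) (M : seq R) (P : seq (instr n)) :
  allrb (size M) P -> forall M', exec_prog T (M ++ M') P = M ++ M' ++ map (exec_instr T M) P.
Proof.
elim: P => [|ins P IH] /= h M'; first by rewrite cats0.
case: h => h1 h2.
by rewrite exec_instr_cat // rcons_cat IH // -cats1 -!catA.
Qed.

Lemma exec_indep0 (R : fieldType) n (T : tensor R n) (M : seq R) (P : seq (instr n)) :
  allrb (size M) P -> exec_prog T M P = M ++ map (exec_instr T M) P.
Proof. by move=> h; have := exec_indep T h [::]; rewrite cats0. Qed.

Lemma exec_cat (R : fieldType) n (T : tensor R n) (M : seq R) (P1 P2 : seq (instr n)) :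
  exec_prog T M (P1 ++ P2) = exec_prog T (exec_prog T M P1) P2.
Proof. by elim: P1 M => //= ins P IH M; rewrite IH. Qed.

Lemma exec_ext (R : fieldType) n (T : tensor R n) (M : seq R) (P : seq (instr n)) :
  exists s, exec_prog T M P = M ++ s /\ size s = size P.
Proof.
elim: P M => [|ins P IH] M /=; first by exists [::]; rewrite cats0.
have [s [-> hs]] := IH (rcons M (exec_instr T M ins)).
by exists (exec_instr T M ins :: s); rewrite -cats1 -catA /= hs.
Qed.

Lemma size_exec (R : fieldType) n (T : tensor R n) (M : seq R) (P : seq (instr n)) :
  size (exec_prog T M P) = (size M + size P)%N.
Proof. by have [s [-> hs]] := exec_ext T M P; rewrite size_cat hs. Qed.

Lemma nth_exec (R : fieldType) n (T : tensor R n) (M : seq R) (P : seq (instr n)) a :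
  (a < size M)%N -> nth 0 (exec_prog T M P) a = nth 0 M a.
Proof. by move=> h; have [s [-> _]] := exec_ext T M P; rewrite nth_cat h. Qed.

Lemma nth_app_map (R : Type) (x0 : R) (M : seq R) (f : nat -> R) r t :
  (t < r)%N -> nth x0 (M ++ map f (iota 0 r)) (size M + t) = f t.
Proof.
by move=> h; rewrite nth_cat ltnNge leq_addr /= addKn (nth_map 0) ?size_iota // nth_iota.
Qed.

Lemma nth_app_lt (R : Type) (x0 : R) (M s : seq R) a :
  (a < size M)%N -> nth x0 (M ++ s) a = nth x0 M a.
Proof. by move=> h; rewrite nth_cat h. Qed.

Lemma size_xs (R : Type) n (x : 'I_n -> R) : size [seq x j | j <- enum 'I_n] = n.
Proof. rewrite size_map. exact: size_enum_ord. Qed.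

Lemma init_x (R : Type) n (x : 'I_n -> R) (w : nat -> R) (x0 : R) (l : 'I_n) :
  nth x0 (init_mem x w) l = x l.
Proof.
rewrite /init_mem nth_cat size_xs ltn_ord.
rewrite (nth_map l); last by have := size_xs x; rewrite size_map => ->.
by rewrite nth_ord_enum.
Qed.

Lemma init_w (R : Type) n (x : 'I_n -> R) (w : nat -> R) (x0 : R) s :
  (s < n)%N -> nth x0 (init_mem x w) (n + s) = w s.
Proof.
move=> h; rewrite /init_mem nth_cat size_xs ltnNge leq_addr /= addKn.
by rewrite (nth_map 0%N) ?size_iota // nth_iota.
Qed.

Lemma size_init (R : Type) n (x : 'I_n -> R) (w : nat -> R) : size (init_mem x w) = (n + n)%N.
Proof. by rewrite /init_mem size_cat size_xs size_map size_iota. Qed.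


Lemma gmap_lin (R : comNzRingType) n (T : tensor R n) (a b : 'I_n -> R) (A B : 'I_n -> 'I_2 -> R) :
  gmap T (fun l k => a l * A l k + b l * B l k) =
  \sum_(J : {set 'I_n}) (\prod_(l in J) a l * \prod_(l in ~: J) b l) *
      gmap T (fun l => if l \in J then A l else B l).
Proof.
rewrite /gmap.
under eq_bigr do rewrite bigA_distr mulr_sumr.
rewrite exchange_big /=; apply: eq_bigr => J _; rewrite mulr_sumr; apply: eq_bigr => s _.
rewrite mulrCA; congr (_ * _).
transitivity (\prod_(l < n) ((if l \in J then a l else b l) * (if l \in J then A l else B l) (s l))).
  by apply: eq_bigr => l _; case: (l \in J).
rewrite big_split /=; congr (_ * _).
rewrite (bigID (mem J)) /=; congr (_ * _).
  by apply: eq_big => // l ->.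
by apply: eq_big => [l|l /negbTE ->//]; rewrite in_setC.
Qed.


Definition Qpoly (R : nzRingType) n (T : tensor R n) (x : 'I_n -> R) (i : 'I_n) : {poly R} :=
  \sum_(C : {set 'I_n} | i \notin C) (coal T x (i |: C) - coal T x C) *: 'X^#|C|.

Definition yq (R : nzRingType) n (x : 'I_n -> R) (i : 'I_n) (u : R) : 'I_n -> 'I_2 -> R :=
  fun l k => if l == i then (if k == ord0 then x i else 0)
             else (if k == ord0 then u * x l else u + 1).

Lemma query_val (R : comNzRingType) n (T : tensor R n) x i (u : R) :
  gmap T (yq x i u) = (Qpoly T x i).[u].
Proof.
pose a l : R := if l == i then 1 else u.
pose b l : R := if l == i then -1 else 1.
rewrite (@gmap_ext _ _ _ _ (fun l k => a l * tvec (x l) k + b l * tvec 0 k)); last first.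
  move=> l k; rewrite /yq /a /b /tvec; case: eqP => [->|_]; case: (k == ord0); ring.
rewrite (gmap_lin T a b (fun l => tvec (x l)) (fun _ => tvec 0)) horner_sum.
rewrite (bigID (fun J : {set 'I_n} => i \in J)) /=.
rewrite (reindex_inj (h := fun J : {set 'I_n} => if i \in J then J :\ i else i |: J)); last first.
  move=> J1 J2 /=.
  case: (boolP (i \in J1)) => h1; case: (boolP (i \in J2)) => h2 e.
  - by rewrite -(setD1K h1) e setD1K.
  - by have := setU11 i J2; rewrite -e !inE eqxx.
  - by have := setU11 i J1; rewrite e !inE eqxx.
  - by rewrite -(setU1K h1) e setU1K.
have e1 : forall J : {set 'I_n}, (i \in (if i \in J then J :\ i else i |: J)) = (i \notin J).
  by move=> J; case: (boolP (i \in J)) => h; rewrite ?inE ?eqxx ?h.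
under eq_bigl do rewrite e1.
rewrite -big_split /=.
apply: eq_bigr => J hJ.
rewrite (negbTE hJ) hornerZ hornerXn.
have pa : \prod_(l in J) a l = u ^+ #|J|.
  rewrite -prodr_const; apply: eq_bigr => l lJ; rewrite /a.
  by case: eqP => // el; move: hJ; rewrite -el lJ.
rewrite big_setU1 //= pa {1}/a eqxx mul1r.
rewrite [\prod_(l in ~: (i |: J)) b l]big1; last first.
  by move=> l; rewrite !inE negb_or /b => /andP[/negbTE -> _].
rewrite (bigD1 i) /=; last by rewrite inE.
rewrite big1; last by move=> l /andP[_ /negbTE h]; rewrite /b h.
rewrite /b eqxx /coal; ring.
Qed.


Definition Lf (R : nzRingType) (n : nat) (w : nat -> R) (s : nat) (P : {poly R}) : R :=
  \sum_(l < n) w (l + s)%N * P`_l.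

Fixpoint Qk (R : fieldType) (P : {poly R}) (k : nat) : {poly R} :=
  match k with
  | 0 => P
  | k'.+1 => let Q := Qk P k' in (Q - (Q.[k'%:R])%:P) %/ ('X - (k'%:R)%:P)
  end.

Lemma Qk_eq (R : fieldType) (P : {poly R}) k :
  Qk P k = (Qk P k).[k%:R]%:P + Qk P k.+1 * ('X - (k%:R)%:P).
Proof.
rewrite /= divpK; first by rewrite addrC subrK.
by rewrite dvdp_XsubCl rootE !hornerE subrr.
Qed.

Lemma Qk_size (R : fieldType) (P : {poly R}) N k :
  (size P <= N)%N -> (k <= N)%N -> (size (Qk P k) <= N - k)%N.
Proof.
move=> hP; elim: k => [|k IH] hk; first by rewrite subn0.
have IH' := IH (ltnW hk).
rewrite /= size_divp; last by rewrite -size_poly_eq0 size_XsubC.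
rewrite size_XsubC /=.
have := size_polyD (Qk P k) (- ((Qk P k).[k%:R])%:P).
rewrite size_polyN.
have := size_polyC_leq1 ((Qk P k).[k%:R]).
move: IH'; set a := size (Qk P k); set b := size _; set c := size _.
move=> h1 h2 h3.
lia.
Qed.

Lemma Qk_val (R : numFieldType) (P : {poly R}) k j : (k < j)%N ->
  (Qk P k.+1).[j%:R] = ((Qk P k).[j%:R] - (Qk P k).[k%:R]) / (j - k)%:R.
Proof.
move=> hkj.
have hne : (j - k)%:R != 0 :> R by rewrite pnatr_eq0; lia.
rewrite [X in (X.[j%:R] - _)](Qk_eq P k) !hornerE natrB ?(ltnW hkj) //.
rewrite natrB ?(ltnW hkj) // in hne.
by field.
Qed.

Lemma Lf_const (R : nzRingType) m (w : nat -> R) s (c : R) :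
  Lf m.+1 w s c%:P = w s * c.
Proof.
rewrite /Lf big_ord_recl /= coefC eqxx add0n big1 ?addr0 // => l _.
by rewrite coefC /= mulr0.
Qed.

Lemma Lf_add (R : nzRingType) n (w : nat -> R) s (p q : {poly R}) :
  Lf n w s (p + q) = Lf n w s p + Lf n w s q.
Proof. by rewrite /Lf -big_split; apply: eq_bigr => l _; rewrite coefD mulrDr. Qed.

Lemma Lf_scale (R : comNzRingType) n (w : nat -> R) s a (p : {poly R}) :
  Lf n w s (a *: p) = a * Lf n w s p.
Proof. by rewrite /Lf mulr_sumr; apply: eq_bigr => l _; rewrite coefZ mulrCA. Qed.

Lemma Lf_X (R : nzRingType) m (w : nat -> R) s (p : {poly R}) :
  (size p <= m)%N -> Lf m.+1 w s (p * 'X) = Lf m.+1 w s.+1 p.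
Proof.
move=> hp; rewrite /Lf big_ord_recl big_ord_recr /= coefMX eqxx mulr0 add0r.
have -> : p`_m = 0 by move/leq_sizeP: hp; apply.
rewrite mulr0 addr0; apply: eq_bigr => l _; rewrite coefMX /= addSnnS.
by [].
Qed.

Lemma Lf_step (R : comNzRingType) m (w : nat -> R) s (c a : R) (p : {poly R}) :
  (size p <= m)%N ->
  Lf m.+1 w s (c%:P + p * ('X - a%:P)) = w s * c + Lf m.+1 w s.+1 p - a * Lf m.+1 w s p.
Proof.
move=> hp; rewrite Lf_add Lf_const mulrBr Lf_add Lf_X // [p * a%:P]mulrC mul_polyC -scaleNr Lf_scale.
by rewrite mulNr addrA.
Qed.



Lemma card_lt n (i : 'I_n) (C : {set 'I_n}) : i \notin C -> (#|C| < n)%N.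
Proof.
move=> hi; rewrite -[X in (_ < X)%N](card_ord n) -cardsT; apply: proper_card.
by rewrite properT; apply/eqP => e; move: hi; rewrite e inE.
Qed.

Lemma Qpoly_coef (R : nzRingType) n (T : tensor R n) x i l :
  (Qpoly T x i)`_l = \sum_(C : {set 'I_n} | i \notin C) (coal T x (i |: C) - coal T x C) * (l == #|C|)%:R.
Proof. by rewrite coef_sum; apply: eq_bigr => C _; rewrite coefZ coefXn. Qed.

Lemma Qpoly_size (R : nzRingType) n (T : tensor R n) x i : (size (Qpoly T x i) <= n)%N.
Proof.
apply/leq_sizeP => j hj; rewrite Qpoly_coef big1 // => C hC.
have := card_lt hC; case: eqP => [e|_]; last by rewrite mulr0.
lia.
Qed.

Lemma Phi_Lf (R : comNzRingType) n (T : tensor R n) x w i :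
  Phi T x w i = Lf n w 0 (Qpoly T x i).
Proof.
rewrite /Phi /Lf.
under [RHS]eq_bigr do rewrite Qpoly_coef mulr_sumr.
rewrite exchange_big /=; apply: eq_bigr => C hC.
rewrite (bigD1 (Ordinal (card_lt hC))) //= big1 ?addr0.
  by rewrite addn0 eqxx mulr1.
move=> l hl; rewrite (_ : (l == #|C| :> nat) = false) ?mulr0 //.
by apply/negbTE; apply: contra hl => /eqP e; apply/eqP/val_inj.
Qed.

Local Open Scope nat_scope.

Definition L0 n := n + n.
Definition L1 n := L0 n + n.+1.
Definition L2 n := L1 n + n * n.
Definition L3 n := L2 n + n.

Definition P1a n : seq (instr n) := [seq IConst n j | j <- iota 0 n.+1].
Definition P1b n : seq (instr n) := [seq IMul n (L0 n + t %/ n) (t %% n) | t <- iota 0 (n * n)].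
Definition qv n (i : 'I_n) (j : nat) : 'I_n -> 'I_2 -> nat :=
  fun l k => if l == i then (if k == ord0 then nat_of_ord i else L0 n)
             else (if k == ord0 then L1 n + j * n + l else L0 n + j.+1).
Definition P1c n (i : 'I_n) : seq (instr n) := [seq IQuery (qv i j) | j <- iota 0 n].

Local Open Scope ring_scope.

Lemma phase1 (R : realFieldType) n (i : 'I_n) (T : tensor R n) x w :
  let M := exec_prog T (init_mem x w) (P1a n ++ P1b n ++ P1c i) in
  size M = L3 n /\
  (forall a, (a < n + n)%N -> nth 0 M a = nth 0 (init_mem x w) a) /\
  (forall j, (j < n)%N -> nth 0 M (L2 n + j) = (Qpoly T x i).[j%:R]).
Proof.
move=> M.
have n0 : (0 < n)%N := leq_ltn_trans (leq0n i) (ltn_ord i).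
have sz0 := size_init x w.
set M0 := init_mem x w in sz0 M *.
have r1 : allrb (size M0) (P1a n) by apply: allrb_map.
set M1 := M0 ++ map (exec_instr T M0) (P1a n).
have sz1 : size M1 = L1 n by rewrite size_cat size_map size_map size_iota sz0.
have v1 : forall j, (j <= n)%N -> nth 0 M1 (L0 n + j) = j%:R.
  move=> j hj; rewrite /M1 /P1a -map_comp (_ : L0 n = size M0) //.
  by rewrite nth_app_map.
have r2 : allrb (size M1) (P1b n).
  apply: allrb_map => t _ ht; rewrite sz1 /L1 /L0 /=.
  have h1 := ltn_pmod t n0.
  have h2 : (t %/ n < n)%N by rewrite ltn_divLR.
  split; lia.
set M2 := M1 ++ map (exec_instr T M1) (P1b n).
have sz2 : size M2 = L2 n by rewrite size_cat !size_map size_iota sz1.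
have v2 : forall j (l : 'I_n), (j < n)%N -> nth 0 M2 (L1 n + j * n + l) = j%:R * x l.
  move=> j l hj; rewrite /M2 /P1b -map_comp -addnA (_ : L1 n = size M1) // nth_app_map; last first.
    have := ltn_ord l; nia.
  rewrite /= divnMDl // divn_small // addn0 modnMDl modn_small //.
  rewrite v1 ?(ltnW hj) //.
  rewrite /M1 nth_app_lt; last by rewrite sz0 (leq_trans (ltn_ord l)) ?leq_addr.
  by rewrite /M0 init_x.
have r3 : allrb (size M2) (P1c i).
  apply: allrb_map => j _ hj l k; rewrite sz2 /qv /L2 /L1 /L0.
  have := ltn_ord l; have := ltn_ord i.
  case: (l == i); case: (k == ord0); nia.
have eM : M = M2 ++ map (exec_instr T M2) (P1c i).
  by rewrite /M !exec_cat exec_indep0 // exec_indep0 // exec_indep0.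
split; first by rewrite eM size_cat !size_map size_iota sz2.
split.
  move=> a ha; rewrite eM nth_app_lt; last by rewrite sz2 /L2 /L1 /L0; lia.
  rewrite /M2 nth_app_lt; last by rewrite sz1 /L1 /L0; lia.
  by rewrite /M1 nth_app_lt // sz0.
move=> j hj; rewrite eM /P1c -map_comp (_ : L2 n = size M2) // nth_app_map //=.
rewrite -query_val; apply: gmap_ext => l k; rewrite /qv /yq.
case: (boolP (l == i)) => _; case: (k == ord0).
- rewrite /M2 nth_app_lt; last by rewrite sz1 /L1 /L0; have := ltn_ord i; lia.
  rewrite /M1 nth_app_lt; last by rewrite sz0; have := ltn_ord i; lia.
  by rewrite /M0 init_x.
- rewrite /M2 nth_app_lt; last by rewrite sz1 /L1 /L0; lia.
  by have := v1 0%N (leq0n n); rewrite addn0.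
- by rewrite v2.
- rewrite /M2 nth_app_lt; last by rewrite sz1 /L1 /L0; lia.
  by rewrite v1 // -natr1.
Qed.

Local Open Scope nat_scope.

Definition row2 n L b r : seq (instr n) :=
  [seq IConst n t.+1 | t <- iota 0 r] ++ [seq ISub n (b + t.+1) b | t <- iota 0 r] ++
  [seq IDiv n (L + r + t) (L + t) | t <- iota 0 r].

Fixpoint ph2 n cnt L b : seq (instr n) * seq nat :=
  match cnt with
  | 0 => ([::], [:: b])
  | c.+1 => let pr := ph2 n c (L + 3 * c.+1) (L + 2 * c.+1) in
            (row2 n L b c.+1 ++ pr.1, b :: pr.2)
  end.

Local Open Scope ring_scope.

Lemma row2_spec (R : realFieldType) n (T : tensor R n) (M : seq R) L b r :
  size M = L -> (b + r < L)%N ->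
  let M' := exec_prog T M (row2 n L b r) in
  size M' = (L + 3 * r)%N /\ (forall a, (a < L)%N -> nth 0 M' a = nth 0 M a) /\
  (forall t, (t < r)%N -> nth 0 M' (L + 2 * r + t) = (nth 0 M (b + t.+1) - nth 0 M b) / t.+1%:R).
Proof.
move=> sM hb M'.
have rA : allrb (size M) ([seq IConst n t.+1 | t <- iota 0 r] ++ [seq ISub n (b + t.+1) b | t <- iota 0 r]).
  by apply: allrb_cat; apply: allrb_map => t _ ht //=; split; lia.
set MA := M ++ map (exec_instr T M) ([seq IConst n t.+1 | t <- iota 0 r] ++ [seq ISub n (b + t.+1) b | t <- iota 0 r]).
have sA : size MA = (L + 2 * r)%N by rewrite size_cat !size_map size_cat !size_map size_iota; lia.
have rB : allrb (size MA) [seq IDiv n (L + r + t) (L + t) | t <- iota 0 r].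
  by apply: allrb_map => t _ ht /=; rewrite sA; split; lia.
have eM : M' = MA ++ map (exec_instr T MA) [seq IDiv n (L + r + t) (L + t) | t <- iota 0 r].
  by rewrite /M' /row2 catA exec_cat exec_indep0 // exec_indep0.
have vc : forall t, (t < r)%N -> nth 0 MA (L + t) = t.+1%:R.
  move=> t ht; rewrite /MA map_cat catA -sM nth_app_lt; last first.
  by rewrite size_cat !size_map size_iota ltn_add2l.
  by rewrite -map_comp nth_app_map.
have vs : forall t, (t < r)%N -> nth 0 MA (L + r + t) = nth 0 M (b + t.+1) - nth 0 M b.
  move=> t ht; rewrite /MA map_cat catA -map_comp (_ : (L + r)%N = size (M ++ map (exec_instr T M \o IConst n \o S) (iota 0 r))); last first.
    by rewrite size_cat size_map size_iota sM.
  by rewrite -map_comp nth_app_map.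
split; first by rewrite eM size_cat !size_map size_iota sA; lia.
split.
  move=> a ha; rewrite eM nth_app_lt; last by rewrite sA; lia.
  by rewrite /MA nth_app_lt // sM.
move=> t ht; rewrite eM -map_comp -sA nth_app_map //=.
by rewrite vc // vs.
Qed.

Lemma ph2_spec (R : realFieldType) n (T : tensor R n) (Q : {poly R}) cnt :
  forall k L b (M : seq R), size M = L -> (b + cnt < L)%N ->
  (forall t, (t <= cnt)%N -> nth 0 M (b + t) = (Qk Q k).[(k + t)%:R]) ->
  let pr := ph2 n cnt L b in let M' := exec_prog T M pr.1 in
  (forall a, (a < L)%N -> nth 0 M' a = nth 0 M a) /\
  forall k', (k' <= cnt)%N -> (nth 0%N pr.2 k' < size M')%N /\
     nth 0 M' (nth 0%N pr.2 k') = (Qk Q (k + k')).[(k + k')%:R].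
Proof.
elim: cnt => [|c IH] k L b M sM hb hv pr M'.
  split => // k'; rewrite leqn0 => /eqP ->; rewrite /M' /= addn0.
  by split; [lia | rewrite -(addn0 b) hv // addn0].
have [s1 [s2 s3]] := row2_spec T sM hb.
set Mr := exec_prog T M (row2 n L b c.+1) in s1 s2 s3.
have := IH k.+1 (L + 3 * c.+1)%N (L + 2 * c.+1)%N Mr s1 ltac:(lia).
case.
  move=> t ht; rewrite s3; last by lia.
  rewrite hv // -(addn0 b) hv // !addn0 (Qk_val Q (k := k) (j := (k.+1 + t)%N)); last by lia.
  by rewrite (_ : (k.+1 + t - k)%N = t.+1) ?addnS ?addSn //; lia.
move=> h1 h2.
have eM' : M' = exec_prog T Mr (ph2 n c (L + 3 * c.+1) (L + 2 * c.+1)).1.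
  by rewrite /M' /pr /= exec_cat.
split.
  move=> a ha; rewrite eM' h1; last by lia.
  by rewrite s2.
case=> [|k'] hk /=.
  rewrite eM' size_exec s1 h1; last by lia.
  by rewrite s2 ?addn0; [split; [lia|rewrite -(addn0 b) hv // addn0]|lia].
have [h3 h4] := h2 k' hk.
by rewrite eM' addnS -addSn; split.
Qed.

Local Open Scope nat_scope.

Definition rowm n cm : seq (instr n) := [seq IMul n cm (n + s) | s <- iota 0 n].

Definition row3 n L k ck eb : seq (instr n) :=
  IConst n k ::
  ([seq IMul n ck (n + s) | s <- iota 0 k.+1] ++ [seq IMul n L (eb + s) | s <- iota 0 k.+1]) ++
  [seq IAdd n (L + 1 + s) (eb + s.+1) | s <- iota 0 k.+1] ++
  [seq ISub n (L + 1 + 2 * k.+1 + s) (L + 1 + k.+1 + s) | s <- iota 0 k.+1].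

Fixpoint ph3 n cnt L eb (cs : seq nat) : seq (instr n) :=
  match cnt with
  | 0 => [::]
  | k.+1 => row3 n L k (nth 0 cs k) eb ++ ph3 n k (L + 1 + 4 * k.+1) (L + 1 + 3 * k.+1) cs
  end.

Local Open Scope ring_scope.

Lemma exec_cons (R : fieldType) n (T : tensor R n) (M : seq R) ins P :
  exec_prog T M (ins :: P) = exec_prog T (rcons M (exec_instr T M ins)) P.
Proof. by []. Qed.

Lemma rowm_spec (R : realFieldType) n (T : tensor R n) (M : seq R) cm :
  (cm < size M)%N -> (n + n <= size M)%N ->
  let M' := exec_prog T M (rowm n cm) in
  size M' = (size M + n)%N /\ (forall a, (a < size M)%N -> nth 0 M' a = nth 0 M a) /\
  (forall s, (s < n)%N -> nth 0 M' (size M + s) = nth 0 M cm * nth 0 M (n + s)).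
Proof.
move=> hc hn M'.
have r : allrb (size M) (rowm n cm) by apply: allrb_map => s _ hs /=; split; lia.
have eM : M' = M ++ map (exec_instr T M) (rowm n cm) by rewrite /M' exec_indep0.
split; first by rewrite eM size_cat !size_map size_iota.
split; first by move=> a ha; rewrite eM nth_app_lt.
by move=> s hs; rewrite eM /rowm -map_comp nth_app_map.
Qed.

Lemma row3_spec (R : realFieldType) n (T : tensor R n) (M : seq R) L k ck eb :
  size M = L -> (ck < L)%N -> (n + k < L)%N -> (eb + k.+1 < L)%N ->
  let M' := exec_prog T M (row3 n L k ck eb) in
  size M' = (L + 1 + 4 * k.+1)%N /\ (forall a, (a < L)%N -> nth 0 M' a = nth 0 M a) /\
  (forall s, (s <= k)%N -> nth 0 M' (L + 1 + 3 * k.+1 + s) =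
      nth 0 M ck * nth 0 M (n + s) + nth 0 M (eb + s.+1) - k%:R * nth 0 M (eb + s)).
Proof.
move=> sM hc hn he M'.
set A := [seq IMul n ck (n + s) | s <- iota 0 k.+1].
set B := [seq IMul n L (eb + s) | s <- iota 0 k.+1].
set C := [seq IAdd n (L + 1 + s) (eb + s.+1) | s <- iota 0 k.+1].
set D := [seq ISub n (L + 1 + 2 * k.+1 + s) (L + 1 + k.+1 + s) | s <- iota 0 k.+1].
set M1 := rcons M (k%:R : R).
have s1 : size M1 = (L + 1)%N by rewrite size_rcons sM addn1.
have rAB : allrb (size M1) (A ++ B).
  by rewrite s1; apply: allrb_cat; apply: allrb_map => s _ hs /=; split; lia.
set M2 := M1 ++ map (exec_instr T M1) (A ++ B).
have s2 : size M2 = (L + 1 + 2 * k.+1)%N.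
  by rewrite size_cat !size_map size_cat !size_map !size_iota s1; lia.
have rC : allrb (size M2) C by rewrite s2; apply: allrb_map => s _ hs /=; split; lia.
set M3 := M2 ++ map (exec_instr T M2) C.
have s3 : size M3 = (L + 1 + 3 * k.+1)%N.
  by rewrite size_cat !size_map !size_iota s2; lia.
have rD : allrb (size M3) D by rewrite s3; apply: allrb_map => s _ hs /=; split; lia.
have eM : M' = M3 ++ map (exec_instr T M3) D.
  rewrite /M' /row3 exec_cons (_ : exec_instr T M (IConst n k) = k%:R) // -/M1.
  rewrite (exec_cat T M1 (A ++ B) (C ++ D)) (exec_indep0 T rAB) -/M2.
  by rewrite (exec_cat T M2 C D) (exec_indep0 T rC) -/M3 (exec_indep0 T rD).
have p1 : forall a, (a < L)%N -> nth 0 M1 a = nth 0 M a.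
  by move=> a ha; rewrite /M1 nth_rcons sM ha.
have p2 : forall a, (a < L + 1)%N -> nth 0 M2 a = nth 0 M1 a.
  by move=> a ha; rewrite /M2 nth_app_lt // s1.
have p3 : forall a, (a < L + 1 + 2 * k.+1)%N -> nth 0 M3 a = nth 0 M2 a.
  by move=> a ha; rewrite /M3 nth_app_lt // s2.
have p4 : forall a, (a < L + 1 + 3 * k.+1)%N -> nth 0 M' a = nth 0 M3 a.
  by move=> a ha; rewrite eM nth_app_lt // s3.
split; first by rewrite eM size_cat !size_map size_iota s3; lia.
split.
  by move=> a ha; rewrite p4 ?p3 ?p2 ?p1 //; lia.
move=> s hs.
have vK : nth 0 M1 L = k%:R by rewrite /M1 nth_rcons sM ltnn eqxx.
have vA : nth 0 M2 (L + 1 + s) = nth 0 M ck * nth 0 M (n + s).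
  rewrite /M2 map_cat catA -map_comp -s1 nth_app_lt; last by rewrite size_cat size_map size_iota s1; lia.
  by rewrite nth_app_map //= !p1 //; lia.
have vB : nth 0 M2 (L + 1 + k.+1 + s) = k%:R * nth 0 M (eb + s).
  rewrite /M2 map_cat catA -!map_comp.
  rewrite (_ : (L + 1 + k.+1)%N = size (M1 ++ map (exec_instr T M1 \o (fun s => IMul n ck (n + s))) (iota 0 k.+1))); last first.
    by rewrite size_cat size_map size_iota s1.
  by rewrite nth_app_map //= vK p1 //; lia.
have vC : nth 0 M3 (L + 1 + 2 * k.+1 + s) = nth 0 M ck * nth 0 M (n + s) + nth 0 M (eb + s.+1).
  rewrite /M3 -map_comp -s2 nth_app_map //= vA p2; last by lia.
  by rewrite p1 //; lia.
rewrite eM -map_comp -s3 nth_app_map //= vC p3; last by lia.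
by rewrite vB.
Qed.

Lemma ph3_spec (R : realFieldType) m (T : tensor R m.+1) (Q : {poly R}) (w : nat -> R) (cs : seq nat) :
  (size Q <= m.+1)%N ->
  forall cnt L eb (M : seq R), (cnt <= m)%N -> size M = L -> (eb + cnt).+1 = L -> (m.+1 + m.+1 <= L)%N ->
  (forall s, (s < m.+1)%N -> nth 0 M (m.+1 + s) = w s) ->
  (forall k, (k < cnt)%N -> (nth 0%N cs k < L)%N /\ nth 0 M (nth 0%N cs k) = (Qk Q k).[k%:R]) ->
  (forall s, (s <= cnt)%N -> nth 0 M (eb + s) = Lf m.+1 w s (Qk Q cnt)) ->
  last 0 (exec_prog T M (ph3 m.+1 cnt L eb cs)) = Lf m.+1 w 0 (Qk Q 0).
Proof.
move=> hQ; elim=> [|k IH] L eb M hk sM he hL hw hc hv.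
  by rewrite /= -nth_last sM -he /= -(addn0 eb) addn0 hv.
have hck := hc k (ltnSn k).
have h1 : (m.+1 + k < L)%N by lia.
have h2 : (eb + k.+1 < L)%N by lia.
have [s1 [s2 s3]] := row3_spec T sM (proj1 hck) h1 h2.
rewrite (_ : ph3 m.+1 k.+1 L eb cs = row3 m.+1 L k (nth 0%N cs k) eb ++ ph3 m.+1 k (L + 1 + 4 * k.+1) (L + 1 + 3 * k.+1) cs) //.
rewrite exec_cat; apply: IH => //.
- by lia.
- by lia.
- by lia.
- by move=> s hs; rewrite s2 ?hw //; lia.
- move=> k' hk'; have [g1 g2] := hc k' (ltn_trans hk' (ltnSn k)).
  by rewrite s2 //; split => //; lia.
move=> s hs; rewrite s3 // hw; last by lia.
rewrite (proj2 hck) !hv //; last by lia.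
rewrite [in RHS](Qk_eq Q k) Lf_step; last first.
  have hs' : (k.+1 <= m.+1)%N by lia.
  by have := Qk_size hQ hs'; rewrite subSS => h; apply: leq_trans h (leq_subr _ _).
by rewrite mulrC.
Qed.

Local Open Scope nat_scope.

Definition P1 n (i : 'I_n) : seq (instr n) := P1a n ++ P1b n ++ P1c i.

Definition prog n (i : 'I_n) : seq (instr n) :=
  let pr := ph2 n n.-1 (L3 n) (L2 n) in
  let L4 := L3 n + size pr.1 in
  P1 i ++ pr.1 ++ rowm n (nth 0 pr.2 n.-1) ++ ph3 n n.-1 (L4 + n) L4 pr.2.

Lemma count_noq n (f : nat -> instr n) s :
  (forall t, is_query (f t) = false) -> count (@is_query n) (map f s) = 0.
Proof. by move=> h; elim: s => //= t s ->; rewrite h. Qed.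

Lemma ph2_noq n cnt L b : count (@is_query n) (ph2 n cnt L b).1 = 0.
Proof.
elim: cnt L b => [//|c IH] L b.
rewrite (_ : (ph2 n c.+1 L b).1 = row2 n L b c.+1 ++ (ph2 n c (L + 3 * c.+1) (L + 2 * c.+1)).1) //.
by rewrite count_cat IH /row2 !count_cat !count_noq.
Qed.

Lemma ph3_noq n cnt L eb cs : count (@is_query n) (ph3 n cnt L eb cs) = 0.
Proof.
elim: cnt L eb => [//|c IH] L eb.
rewrite (_ : ph3 n c.+1 L eb cs = row3 n L c (nth 0 cs c) eb ++ ph3 n c (L + 1 + 4 * c.+1) (L + 1 + 3 * c.+1) cs) //.
by rewrite count_cat IH /row3 -cat1s !count_cat !count_noq.
Qed.

Lemma ph2_size n cnt L b : size (ph2 n cnt L b).1 <= 3 * cnt * cnt.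
Proof.
elim: cnt L b => [//|c IH] L b.
rewrite (_ : (ph2 n c.+1 L b).1 = row2 n L b c.+1 ++ (ph2 n c (L + 3 * c.+1) (L + 2 * c.+1)).1) //.
rewrite size_cat /row2 !size_cat !size_map !size_iota.
have := IH (L + 3 * c.+1) (L + 2 * c.+1); nia.
Qed.

Lemma ph3_size n cnt L eb cs : size (ph3 n cnt L eb cs) <= 5 * cnt * cnt.
Proof.
elim: cnt L eb => [//|c IH] L eb.
rewrite (_ : ph3 n c.+1 L eb cs = row3 n L c (nth 0 cs c) eb ++ ph3 n c (L + 1 + 4 * c.+1) (L + 1 + 3 * c.+1) cs) //.
rewrite size_cat /row3 -cat1s !size_cat !size_map !size_iota.
have := IH (L + 1 + 4 * c.+1) (L + 1 + 3 * c.+1); rewrite /=; nia.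
Qed.

Lemma P1c_q n (i : 'I_n) : count (@is_query n) (P1c i) = n.
Proof. by rewrite /P1c count_map (eq_count (a2 := predT)) // count_predT size_iota. Qed.

Lemma prog_queries n (i : 'I_n) : n_queries (prog i) <= n.
Proof.
rewrite /n_queries /prog /P1 !count_cat ph2_noq ph3_noq P1c_q /rowm /P1a /P1b !count_noq //.
by rewrite !addn0.
Qed.

Lemma prog_arith n (i : 'I_n) : n_arith (prog i) <= 20 * n ^ 2.
Proof.
rewrite /n_arith (leq_trans (count_size _ _)) // /prog /P1 !size_cat /rowm /P1a /P1b /P1c !size_map !size_iota.
have := ph2_size n n.-1 (L3 n) (L2 n).
have := ph3_size n n.-1 (L3 n + size (ph2 n n.-1 (L3 n) (L2 n)).1 + n)
   (L3 n + size (ph2 n n.-1 (L3 n) (L2 n)).1) (ph2 n n.-1 (L3 n) (L2 n)).2.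
have := ltn_ord i.
nia.
Qed.

Local Open Scope ring_scope.

Lemma prog_correct (R : realFieldType) m (i : 'I_m.+1) (T : tensor R m.+1) x w :
  run T x w (prog i) = Phi T x w i.
Proof.
set n := m.+1.
set Q := Qpoly T x i.
have hQ : (size Q <= n)%N := Qpoly_size T x i.
have [ph1s [ph1a ph1b]] := phase1 i T x w.
set M1 := exec_prog T (init_mem x w) (P1a n ++ P1b n ++ P1c i) in ph1s ph1a ph1b.
set pr := ph2 n n.-1 (L3 n) (L2 n).
have hb : (L2 n + n.-1 < L3 n)%N by rewrite /L3 /n /=; lia.
have hv : forall t, (t <= n.-1)%N -> nth 0 M1 (L2 n + t) = (Qk Q 0).[(0 + t)%:R].
  by move=> t ht; rewrite ph1b /= ?add0n //; rewrite /n; lia.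
have [p2a p2b] := ph2_spec T ph1s hb hv.
rewrite -/pr in p2a p2b.
set M2 := exec_prog T M1 pr.1 in p2a p2b.
have s2 : size M2 = (L3 n + size pr.1)%N by rewrite /M2 size_exec ph1s.
set L4 := (L3 n + size pr.1)%N in s2.
have [cm1 cm2] := p2b n.-1 (leqnn _).
have h2n : (n + n <= size M2)%N by rewrite s2 /L4 /L3 /L2 /L1 /L0; lia.
have [r1 [r2 r3]] := rowm_spec T cm1 h2n.
set M3 := exec_prog T M2 (rowm n (nth 0%N pr.2 n.-1)) in r1 r2 r3.
have hw2 : forall s, (s < n)%N -> nth 0 M2 (n + s) = w s.
  move=> s hs; rewrite p2a; last by rewrite /L3 /L2 /L1 /L0; lia.
  by rewrite ph1a ?init_w //; lia.
have eP : prog i = P1 i ++ pr.1 ++ rowm n (nth 0%N pr.2 n.-1) ++ ph3 n n.-1 (L4 + n) L4 pr.2 by [].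
rewrite /run eP exec_cat (_ : exec_prog T (init_mem x w) (P1 i) = M1) // exec_cat -/M2 exec_cat -/M3.
rewrite Phi_Lf -/Q.
apply: (ph3_spec (w := w) (cs := pr.2) T hQ (L := (L4 + n)%N)) => //.
- by rewrite r1 s2.
- by rewrite /L4 /L3 /L2 /L1 /L0 /n; lia.
- by rewrite /n /L4 /L3 /L2 /L1 /L0; lia.
- by move=> s hs; rewrite r2 ?hw2 // s2 /L4 /L3 /L2 /L1 /L0; lia.
- move=> k hk; have [g1 g2] := p2b k (ltnW hk).
  rewrite r2 //; split => //; apply: leq_trans g1 _; by rewrite s2 leq_addr.
- move=> s hs; rewrite -s2 r3 // hw2 // cm2 add0n.
  have hm : (size (Qk Q m) <= 1)%N.
    by have := Qk_size hQ (leqnSn m); rewrite /n subSnn.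
  rewrite (size1_polyC hm) Lf_const hornerC mulrC.
  done.
Qed.

Local Open Scope ring_scope.

Theorem theorem2 :
  exists c : nat, forall (n : nat), (0 < n)%N -> forall i : 'I_n,
    exists P : seq (instr n),
      (n_queries P <= c * n)%N /\ (n_arith P <= c * n ^ 2)%N /\
      forall (R : realFieldType) (T : tensor R n) (x : 'I_n -> R) (w : nat -> R),
        run T x w P = Phi T x w i.
Proof.
exists 20%N => n hn i; exists (prog i); split.
  by apply: leq_trans (prog_queries i) _; rewrite leq_pmull.
split; first exact: prog_arith.
move=> R; case: n i hn => [[]//|m] i _ T x w.
exact: prog_correct.
Qed.
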